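(* Assume the setting and hypotheses of the following: $(y_i)_{i\ge1}$ is a real sequence, $\mathbf{y}=(y_1,\dots,y_n)$, $\overline{\mathbf{y}}_n=\frac1n\sum_{i\le n}y_i\to\overline{y}_\infty\ne0$; $q=q(n)$, $p=p(n)>0$, $T=T(n)\ge1$ integers with $\log n\le qn\le\sqrt n$ and $T=o(qn)$; $\mathbf{A}$ is the adjacency matrix of $G(n,q)$. Suppose moreover $npq\ge1+\epsilon$ for some fixed $\epsilon>0$ (i.e. $p\,\mathbb{E}[\lambda_1]\ge1+\epsilon$, using $\mathbb{E}[\lambda_1]=nq$). Fix an index $i$. Then: (a) if $T\le(1-\delta)\frac{\log n}{\log(npq)}$ for some fixed $\delta>0$, then $\mathbb{E}[\mathrm{CC}(\mathbf{A},p,T,\mathbf{y})_i]=o(n)$; (b) if $T\ge(1+\delta)\frac{\log n}{\log(npq)}$ for some fixed $\delta>0$, then $|\mathbb{E}[\mathrm{CC}(\mathbf{A},p,T,\mathbf{y})_i]|=\Omega(n)$, i.e. it is at least $cn$ for some $c>0$ and all large $n$.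
   Context: Contextual centrality: $\mathrm{CC}(\mathbf{A},p,T,\mathbf{y})=\sum_{t=0}^{T}(p\mathbf{A})^t\mathbf{y}$. $G(n,q)$ is the Erdős–Rényi random graph: its adjacency matrix is a random symmetric $n\times n$ matrix with zero diagonal and independent Bernoulli($q$) entries above the diagonal. $\log$ is the natural logarithm; $p,q,T$ depend on $n$ and asymptotics are as $n\to\infty$. *)

(* Defs.v *)
From Stdlib Require Import Reals Lra Lia Arith.
Open Scope R_scope.

Fixpoint rsum (n : nat) (f : nat -> R) : R :=
  match n with O => 0 | S k => rsum k f + f k end.

(* Expectation of f over m independent Bernoulli(q) bits g 0, ..., g (m-1)
   (bits with index >= m are set to false). *)
Fixpoint Ebern (q : R) (m : nat) (f : (nat -> bool) -> R) : R :=
  match m with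
  | O => f (fun _ => false)
  | S m' =>
      q * Ebern q m' (fun g => f (fun k => if Nat.eqb k m' then true else g k))
    + (1 - q) * Ebern q m' (fun g => f (fun k => if Nat.eqb k m' then false else g k))
  end.

(* index of the unordered pair {u,v}, u < v, among the n(n-1)/2 pairs *)
Definition pair_index (u v : nat) : nat := (v * (v - 1) / 2 + u)%nat.

Definition adj (g : nat -> bool) (u v : nat) : R :=
  if Nat.ltb u v then (if g (pair_index u v) then 1 else 0)
  else if Nat.ltb v u then (if g (pair_index v u) then 1 else 0)
  else 0.

(* expectation over G(n,q): the n(n-1)/2 above-diagonal entries are iid Bernoulli(q) *)
Definition E_Gnq (n : nat) (q : R) (f : (nat -> nat -> R) -> R) : R :=
  Ebern q (n * (n - 1) / 2) (fun g => f (adj g)).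

Definition matvec (n : nat) (A : nat -> nat -> R) (x : nat -> R) : nat -> R :=
  fun i => rsum n (fun j => A i j * x j).

Fixpoint powv (n : nat) (p : R) (A : nat -> nat -> R) (t : nat) (x : nat -> R)
  : nat -> R :=
  match t with
  | O => x
  | S t' => fun i => p * matvec n A (powv n p A t' x) i
  end.

Definition CC (n : nat) (A : nat -> nat -> R) (p : R) (T : nat) (y : nat -> R)
  : nat -> R :=
  fun i => rsum (S T) (fun t => powv n p A t y i).

(* the vector y = (y_1,...,y_n), 0-indexed: vertex k carries y_(k+1) *)
Definition yvec (y : nat -> R) : nat -> R := fun k => y (S k).

Definition ybar (y : nat -> R) (n : nat) : R := rsum n (fun k => y (S k)) / INR n.

(* Main.v *)
Require Import Defs.
From Stdlib Require Import Reals.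
From Stdlib Require Import Lra Lia Arith List FunctionalExtensionality.
Import ListNotations.
Open Scope R_scope.

Definition ind (b : bool) : R := if b then 1 else 0.

Lemma rsum_ext n f g : (forall k, (k < n)%nat -> f k = g k) -> rsum n f = rsum n g.
Proof. induction n; intros H; simpl; auto. rewrite IHn by (intros; apply H; lia). rewrite H by lia; auto. Qed.

Lemma rsum_plus n f g : rsum n (fun k => f k + g k) = rsum n f + rsum n g.
Proof. induction n; simpl; [lra|]. rewrite IHn; lra. Qed.

Lemma rsum_scal n c f : rsum n (fun k => c * f k) = c * rsum n f.
Proof. induction n; simpl; [lra|]. rewrite IHn; lra. Qed.

Lemma rsum_le n f g : (forall k, (k < n)%nat -> f k <= g k) -> rsum n f <= rsum n g.
Proof. induction n; intros H; simpl; [lra|]. assert (H1 := H n ltac:(lia)).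
 assert (rsum n f <= rsum n g) by (apply IHn; intros; apply H; lia). lra. Qed.

Lemma rsum_const n c : rsum n (fun _ => c) = INR n * c.
Proof. induction n; simpl rsum; [simpl; lra|]. rewrite IHn, S_INR; lra. Qed.

Lemma rsum_upd n f i c : (i < n)%nat ->
  rsum n (fun k => if Nat.eqb k i then c else f k) = rsum n f - f i + c.
Proof. induction n; intros Hi; [lia|]. simpl. destruct (Nat.eqb n i) eqn:E.
 - apply Nat.eqb_eq in E; subst i. rewrite (rsum_ext _ _ f). lra.
   intros k Hk. destruct (Nat.eqb_spec k n); [lia|auto].
 - apply Nat.eqb_neq in E. rewrite IHn by lia. lra. Qed.

Lemma rsum_delta n f i : (i < n)%nat ->
  rsum n (fun k => f k * ind (Nat.eqb k i)) = f i.
Proof. intros Hi. rewrite (rsum_ext _ _ (fun k => if Nat.eqb k i then f i else 0)).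
 rewrite rsum_upd by auto. rewrite rsum_const. simpl. lra.
 intros k _. unfold ind. destruct (Nat.eqb_spec k i); subst; lra. Qed.

Definition swap (j j' v : nat) : nat :=
  if Nat.eqb v j then j' else if Nat.eqb v j' then j else v.

Lemma swap_inv j j' v : swap j j' (swap j j' v) = v.
Proof. unfold swap. destruct (Nat.eqb_spec v j) as [->|H1].
 - rewrite (Nat.eqb_refl j'). destruct (Nat.eqb_spec j' j); auto.
 - destruct (Nat.eqb_spec v j') as [->|H2].
   + rewrite Nat.eqb_refl. auto.
   + destruct (Nat.eqb_spec v j); [lia|]. destruct (Nat.eqb_spec v j'); [lia|auto]. Qed.

Lemma swap_inj j j' a b : swap j j' a = swap j j' b -> a = b.
Proof. intros H. rewrite <- (swap_inv j j' a), <- (swap_inv j j' b), H; auto. Qed.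

Lemma swap_lt j j' n v : (j < n)%nat -> (j' < n)%nat -> (v < n)%nat -> (swap j j' v < n)%nat.
Proof. unfold swap; intros. destruct (Nat.eqb v j), (Nat.eqb v j'); auto. Qed.

Lemma rsum_swap n f j j' : (j < n)%nat -> (j' < n)%nat ->
  rsum n f = rsum n (fun v => f (swap j j' v)).
Proof. intros Hj Hj'. destruct (Nat.eq_dec j j') as [->|Hne].
 - apply rsum_ext. intros k _. unfold swap. destruct (Nat.eqb_spec k j'); subst; auto.
 - set (h := fun v => if Nat.eqb v j then 0 else if Nat.eqb v j' then 0 else f v).
   assert (E1 : rsum n f = rsum n h + f j + f j').
   { set (h' := fun v => if Nat.eqb v j' then 0 else f v).
     change (rsum n f = rsum n (fun v => if Nat.eqb v j then 0 else h' v) + f j + f j').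
     rewrite rsum_upd by auto. unfold h'. rewrite rsum_upd by auto.
     destruct (Nat.eqb_spec j j'); [lia|]. lra. }
   assert (E2 : rsum n (fun v => f (swap j j' v)) = rsum n h + f j' + f j).
   { rewrite (rsum_ext _ _ (fun v => if Nat.eqb v j then f j' else (fun v => if Nat.eqb v j' then f j else h v) v)).
     rewrite rsum_upd by auto. rewrite rsum_upd by auto.
     destruct (Nat.eqb_spec j j'); [lia|].
     unfold h. rewrite !Nat.eqb_refl. destruct (j =? j' ); destruct (j' =? j); lra.
     intros k _. unfold swap, h. destruct (Nat.eqb_spec k j); auto. destruct (Nat.eqb_spec k j'); auto. }
   lra. Qed.

Lemma rsum_nonneg n f : (forall k, (k < n)%nat -> 0 <= f k) -> 0 <= rsum n f.
Proof. intros H. rewrite <- (Rmult_0_r (INR n)), <- rsum_const. apply rsum_le; auto. Qed.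

Lemma Ebern_ext q m f h : (forall g, f g = h g) -> Ebern q m f = Ebern q m h.
Proof. intros H. assert (f = h) by (apply functional_extensionality; auto). subst; auto. Qed.

Lemma Ebern_plus q m f h : Ebern q m (fun g => f g + h g) = Ebern q m f + Ebern q m h.
Proof. revert f h; induction m; intros f h; simpl; auto.
 rewrite (IHm (fun g => f _) (fun g => h _)), (IHm (fun g => f _) (fun g => h _)). lra. Qed.

Lemma Ebern_scal q m c f : Ebern q m (fun g => c * f g) = c * Ebern q m f.
Proof. revert f; induction m; intros f; simpl; auto.
 rewrite (IHm (fun g => f _)), (IHm (fun g => f _)). lra. Qed.

Lemma Ebern_const q m c : Ebern q m (fun _ => c) = c.
Proof. induction m; simpl; auto. rewrite IHm. lra. Qed.

Lemma Ebern_rsum q m n F : Ebern q m (fun g => rsum n (fun v => F g v)) = rsum n (fun v => Ebern q m (fun g => F g v)).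
Proof. induction n; simpl. apply Ebern_const.
 rewrite Ebern_plus, IHn. auto. Qed.

Lemma Ebern_mono q m f h : 0 <= q <= 1 -> (forall g, f g <= h g) -> Ebern q m f <= Ebern q m h.
Proof. intros Hq; revert f h; induction m; intros f h H; simpl; auto.
 assert (Ebern q m (fun g => f (fun k => if Nat.eqb k m then true else g k)) <=
         Ebern q m (fun g => h (fun k => if Nat.eqb k m then true else g k))) by (apply IHm; auto).
 assert (Ebern q m (fun g => f (fun k => if Nat.eqb k m then false else g k)) <=
         Ebern q m (fun g => h (fun k => if Nat.eqb k m then false else g k))) by (apply IHm; auto).
 nra. Qed.

Lemma Ebern_nonneg q m f : 0 <= q <= 1 -> (forall g, 0 <= f g) -> 0 <= Ebern q m f.
Proof. intros Hq H. rewrite <- (Ebern_const q m 0). apply Ebern_mono; auto. Qed.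

Lemma Ebern_bit q m b X : (b < m)%nat ->
  (forall g g', (forall k, k <> b -> g k = g' k) -> X g = X g') ->
  Ebern q m (fun g => X g * ind (g b)) = q * Ebern q m X.
Proof. revert X; induction m; intros X Hb HX; [lia|]. simpl.
 destruct (Nat.eq_dec b m) as [->|Hne].
 - rewrite Nat.eqb_refl. unfold ind.
   rewrite (Ebern_ext q m (fun g => X _ * 0) (fun g => 0 * 0)) by (intros; lra).
   rewrite Ebern_const.
   rewrite (Ebern_ext q m (fun g => X (fun k => if Nat.eqb k m then false else g k))
             (fun g => X (fun k => if Nat.eqb k m then true else g k))).
   rewrite (Ebern_ext q m (fun g => X _ * 1) (fun g => X (fun k => if Nat.eqb k m then true else g k))) by (intros; lra).
   lra.
   intros g. apply HX. intros k Hk. destruct (Nat.eqb_spec k m); [lia|auto].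
 - assert (Hbm : Nat.eqb b m = false) by (apply Nat.eqb_neq; auto). rewrite Hbm.
   rewrite (IHm (fun g => X (fun k => if Nat.eqb k m then true else g k))).
   rewrite (IHm (fun g => X (fun k => if Nat.eqb k m then false else g k))). lra.
   lia. intros g g' H. apply HX. intros k Hk. destruct (Nat.eqb k m); auto.
   lia. intros g g' H. apply HX. intros k Hk. destruct (Nat.eqb k m); auto.
Qed.


Definition tri (v : nat) : nat := (v * (v - 1) / 2)%nat.

Lemma tri_S v : tri (S v) = (tri v + v)%nat.
Proof. unfold tri. replace (S v * (S v - 1))%nat with (v * (v-1) + v * 2)%nat.
 rewrite Nat.div_add by lia. auto. destruct v; simpl; nia. Qed.

Lemma tri_lt v v' : (v < v')%nat -> (tri v + v <= tri v')%nat.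
Proof. induction v'; intros H; [lia|]. rewrite tri_S.
 destruct (Nat.eq_dec v v'); [subst; lia|]. assert (tri v + v <= tri v')%nat by (apply IHv'; lia). lia. Qed.

Lemma pi_tri u v : pair_index u v = (tri v + u)%nat.
Proof. reflexivity. Qed.

Lemma pi_inj u v u' v' : (u < v)%nat -> (u' < v')%nat -> pair_index u v = pair_index u' v' -> u = u' /\ v = v'.
Proof. rewrite !pi_tri. intros H1 H2 E.
 destruct (Nat.lt_total v v') as [Hl|[He|Hl]].
 - pose proof (tri_lt _ _ Hl). lia.
 - subst. lia.
 - pose proof (tri_lt _ _ Hl). lia. Qed.

Lemma pi_lt u v n : (u < v)%nat -> (v < n)%nat -> (pair_index u v < tri n)%nat.
Proof. rewrite pi_tri. intros. pose proof (tri_lt _ _ H0). lia. Qed.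

Definition key (u v : nat) : nat := if Nat.ltb u v then pair_index u v else pair_index v u.

Lemma adj_key g u v : u <> v -> adj g u v = ind (g (key u v)).
Proof. intros H. unfold adj, key, ind. destruct (Nat.ltb_spec u v); auto.
 destruct (Nat.ltb_spec v u); [auto|lia]. Qed.

Lemma adj_diag g u : adj g u u = 0.
Proof. unfold adj. rewrite Nat.ltb_irrefl. auto. Qed.

Lemma adj_01 g u v : adj g u v = 0 \/ adj g u v = 1.
Proof. unfold adj. destruct (Nat.ltb u v), (Nat.ltb v u); try destruct (g _); auto. Qed.

Lemma key_inj x y u v : x <> y -> u <> v -> key x y = key u v -> (x = u /\ y = v) \/ (x = v /\ y = u).
Proof. unfold key; intros. destruct (Nat.ltb_spec x y), (Nat.ltb_spec u v);
 match goal with H : pair_index _ _ = pair_index _ _ |- _ => apply pi_inj in H; lia end. Qed.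

Lemma key_lt u v n : u <> v -> (u < n)%nat -> (v < n)%nat -> (key u v < tri n)%nat.
Proof. unfold key; intros. destruct (Nat.ltb_spec u v); apply pi_lt; lia. Qed.

Fixpoint pw (A : nat -> nat -> R) (w : list nat) : R :=
  match w with
  | x :: r => match r with y :: _ => A x y * pw A r | nil => 1 end
  | nil => 1
  end.

Fixpoint he (a b : nat) (w : list nat) : bool :=
  match w with
  | x :: r => match r with
              | y :: _ => ((Nat.eqb x a && Nat.eqb y b) || (Nat.eqb x b && Nat.eqb y a)) || he a b r
              | nil => false end
  | nil => false
  end.

Definition memb (v : nat) (w : list nat) : bool := existsb (Nat.eqb v) w.

Lemma pw_snoc A w v : w <> nil -> pw A (w ++ [v]) = pw A w * A (last w 0%nat) v.
Proof. induction w as [|x r IH]; intros H; [congruence|].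
 destruct r as [|y r'].
 - simpl. lra.
 - change ((x :: y :: r') ++ [v]) with (x :: ((y :: r') ++ [v])).
   change (pw A (x :: ((y :: r') ++ [v]))) with (A x y * pw A ((y :: r') ++ [v])).
   rewrite IH by congruence. change (pw A (x :: y :: r')) with (A x y * pw A (y :: r')).
   change (last (x :: y :: r') 0%nat) with (last (y :: r') 0%nat). lra. Qed.

Lemma he_snoc a b w v : w <> nil -> he a b (w ++ [v]) =
  (he a b w || ((Nat.eqb (last w 0%nat) a && Nat.eqb v b) || (Nat.eqb (last w 0%nat) b && Nat.eqb v a)))%bool.
Proof. induction w as [|x r IH]; intros H; [congruence|].
 destruct r as [|y r'].
 - simpl. rewrite Bool.orb_false_r. auto.
 - change ((x :: y :: r') ++ [v]) with (x :: ((y :: r') ++ [v])).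
   change (he a b (x :: ((y :: r') ++ [v]))) with
     (((Nat.eqb x a && Nat.eqb y b) || (Nat.eqb x b && Nat.eqb y a)) || he a b ((y :: r') ++ [v]))%bool.
   rewrite IH by congruence. change (last (x :: y :: r') 0%nat) with (last (y :: r') 0%nat).
   change (he a b (x :: y :: r')) with (((Nat.eqb x a && Nat.eqb y b) || (Nat.eqb x b && Nat.eqb y a)) || he a b (y :: r'))%bool. rewrite Bool.orb_assoc. auto. Qed.

Lemma he_memb a b w : he a b w = true -> memb b w = true.
Proof. induction w as [|x r IH]; simpl; [discriminate|].
 destruct r as [|y r']; [discriminate|]. intros H.
 apply Bool.orb_true_iff in H. destruct H as [H|H].
 - apply Bool.orb_true_iff in H; destruct H as [H|H]; apply andb_prop in H; destruct H as [H1 H2];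
   apply Nat.eqb_eq in H1; apply Nat.eqb_eq in H2; subst; simpl; rewrite Nat.eqb_refl; 
   rewrite ?Bool.orb_true_r; auto.
 - apply IH in H. unfold memb in *. simpl. simpl in H. rewrite H. rewrite !Bool.orb_true_r; auto. Qed.

Lemma he_map (f : nat -> nat) a b w : (forall x y, f x = f y -> x = y) ->
  he (f a) (f b) (map f w) = he a b w.
Proof. intros Hf. assert (E : forall x y, Nat.eqb (f x) (f y) = Nat.eqb x y).
 { intros. destruct (Nat.eqb_spec x y); subst. apply Nat.eqb_refl. apply Nat.eqb_neq. intro; apply n; auto. }
 induction w as [|x r IH]; auto. destruct r as [|y r']; auto.
 change (map f (x :: y :: r')) with (f x :: map f (y :: r')).
 change (he (f a) (f b) (f x :: map f (y :: r'))) with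
   (((Nat.eqb (f x) (f a) && Nat.eqb (f y) (f b)) || (Nat.eqb (f x) (f b) && Nat.eqb (f y) (f a))) || he (f a) (f b) (map f (y :: r')))%bool.
 rewrite IH, !E. auto. Qed.

Lemma pw_zero g a b w : he a b w = true -> a <> b -> g (key a b) = false -> pw (adj g) w = 0.
Proof. induction w as [|x r IH]; simpl; [discriminate|].
 destruct r as [|y r']; [discriminate|]. intros H Hab Hg.
 apply Bool.orb_true_iff in H. destruct H as [H|H].
 - assert (adj g x y = 0).
   { apply Bool.orb_true_iff in H; destruct H as [H|H]; apply andb_prop in H; destruct H as [H1 H2];
     apply Nat.eqb_eq in H1; apply Nat.eqb_eq in H2; subst; rewrite adj_key by auto; unfold ind.
     rewrite Hg; auto. unfold key in *. destruct (Nat.ltb_spec a b), (Nat.ltb_spec b a); try lia; rewrite Hg; auto. }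
   rewrite H0. lra.
 - rewrite IH; auto. lra. Qed.

Lemma pw_indep g g' u v w : he u v w = false -> u <> v ->
  (forall k, k <> key u v -> g k = g' k) -> pw (adj g) w = pw (adj g') w.
Proof. intros H Huv Hg. induction w as [|x r IH]; simpl; auto.
 destruct r as [|y r']; auto. simpl in H.
 apply Bool.orb_false_iff in H. destruct H as [H0 H]. rewrite IH by auto. f_equal.
 destruct (Nat.eq_dec x y) as [->|Hxy]. rewrite !adj_diag; auto.
 rewrite !adj_key by auto. rewrite Hg; auto. intro E. apply key_inj in E; auto.
 destruct E as [[-> ->]|[-> ->]]; rewrite !Nat.eqb_refl in H0; simpl in H0;
   rewrite ?Bool.orb_true_r in H0; discriminate. Qed.

Lemma pw_nonneg g w : 0 <= pw (adj g) w.
Proof. induction w as [|x r IH]; [simpl; lra|]. destruct r; [simpl; lra|].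
 change (pw (adj g) (x :: n :: r)) with (adj g x n * pw (adj g) (n :: r)).
 destruct (adj_01 g x n) as [E|E]; rewrite E; lra. Qed.

Lemma pw_le1 g w : pw (adj g) w <= 1.
Proof. induction w as [|x r IH]; [simpl; lra|]. destruct r; [simpl; lra|].
 change (pw (adj g) (x :: n :: r)) with (adj g x n * pw (adj g) (n :: r)).
 pose proof (pw_nonneg g (n :: r)). destruct (adj_01 g x n) as [E|E]; rewrite E; lra. Qed.


Definition om (n : nat) (q : R) (w : list nat) : R := Ebern q (tri n) (fun g => pw (adj g) w).

Lemma last_In_ne (w : list nat) d : w <> nil -> In (last w d) w.
Proof. induction w as [|x r IH]; intros H; [congruence|]. destruct r as [|y r'].
 simpl; auto. change (last (x :: y :: r') d) with (last (y :: r') d). right. apply IH; congruence. Qed.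

Lemma last_map_ne (f : nat -> nat) (w : list nat) d d' : w <> nil -> last (map f w) d = f (last w d').
Proof. induction w as [|x r IH]; intros H; [congruence|]. destruct r as [|y r'].
 simpl; auto. change (last (map f (x :: y :: r')) d) with (last (map f (y :: r')) d).
 change (last (x :: y :: r') d') with (last (y :: r') d'). apply IH; congruence. Qed.

Lemma om_step n q w v : w <> nil -> Forall (fun x => x < n)%nat w -> (v < n)%nat ->
  om n q (w ++ [v]) = if Nat.eqb (last w 0%nat) v then 0
     else if he (last w 0%nat) v w then om n q w else q * om n q w.
Proof. intros Hw Hf Hv. unfold om.
 rewrite (Ebern_ext _ _ _ (fun g => pw (adj g) w * adj g (last w 0%nat) v)) by (intros; apply pw_snoc; auto).
 set (u := last w 0%nat). assert (Hu : (u < n)%nat).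
 { rewrite Forall_forall in Hf. apply Hf. apply last_In_ne; auto. }
 destruct (Nat.eqb_spec u v) as [<-|Huv].
 - rewrite (Ebern_ext _ _ _ (fun g => 0)) by (intros; rewrite adj_diag; lra). apply Ebern_const.
 - rewrite (Ebern_ext _ _ _ (fun g => pw (adj g) w * ind (g (key u v)))) by (intros; rewrite adj_key; auto).
   destruct (he u v w) eqn:Hhe.
   + apply Ebern_ext. intros g. unfold ind. destruct (g (key u v)) eqn:Hg. lra.
     rewrite (pw_zero g u v w); auto. lra.
   + apply Ebern_bit. apply key_lt; auto.
     intros g g' H. apply pw_indep with u v; auto. Qed.

Lemma om_nil n q : om n q nil = 1.
Proof. unfold om; simpl pw; apply Ebern_const. Qed.

Lemma om_single n q x : om n q [x] = 1.
Proof. unfold om; simpl pw; apply Ebern_const. Qed.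

Lemma om_nonneg n q w : 0 <= q <= 1 -> 0 <= om n q w.
Proof. intros. apply Ebern_nonneg; auto. intros; apply pw_nonneg. Qed.

Lemma om_step_le n q w v : 0 <= q <= 1 -> w <> nil -> Forall (fun x => x < n)%nat w -> (v < n)%nat ->
  om n q (w ++ [v]) <= om n q w.
Proof. intros. rewrite om_step by auto. pose proof (om_nonneg n q w H).
 destruct (Nat.eqb _ _); [lra|]. destruct (he _ _ _); nra. Qed.

Lemma om_step_new n q w v : w <> nil -> Forall (fun x => x < n)%nat w -> (v < n)%nat ->
  memb v w = false -> om n q (w ++ [v]) = q * om n q w.
Proof. intros Hw Hf Hv Hm. rewrite om_step by auto.
 destruct (Nat.eqb_spec (last w 0%nat) v).
 - exfalso. assert (In v w) by (rewrite <- e; apply last_In_ne; auto).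
   unfold memb in Hm. assert (existsb (Nat.eqb v) w = true).
   { apply existsb_exists. exists v. split; auto. apply Nat.eqb_refl. } congruence.
 - destruct (he _ _ _) eqn:E; auto. apply he_memb in E. congruence. Qed.

Lemma Forall_map_swap n j j' w : (j < n)%nat -> (j' < n)%nat -> Forall (fun x => x < n)%nat w ->
  Forall (fun x => x < n)%nat (map (swap j j') w).
Proof. intros. apply Forall_map. eapply Forall_impl; [|eauto]. intros; apply swap_lt; auto. Qed.

Lemma om_swap n q j j' w : (j < n)%nat -> (j' < n)%nat -> Forall (fun x => x < n)%nat w ->
  om n q (map (swap j j') w) = om n q w.
Proof. intros Hj Hj'. induction w as [|v l IH] using rev_ind; intros Hf; auto.
 apply Forall_app in Hf. destruct Hf as [Hl Hv]. inversion Hv; subst.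
 destruct l as [|x l'].
 - simpl. rewrite !om_single. auto.
 - rewrite map_app. simpl map at 2.
   assert (Hne : x :: l' <> nil) by congruence.
   assert (Hne' : map (swap j j') (x :: l') <> nil) by (simpl; congruence).
   rewrite om_step by (auto using Forall_map_swap, swap_lt).
   rewrite om_step by auto.
   rewrite (last_map_ne _ _ 0%nat 0%nat) by auto.
   rewrite he_map by apply swap_inj. rewrite IH by auto.
   assert (E : Nat.eqb (swap j j' (last (x :: l') 0%nat)) (swap j j' v) = Nat.eqb (last (x :: l') 0%nat) v).
   { destruct (Nat.eqb_spec (last (x :: l') 0%nat) v). subst. rewrite Nat.eqb_refl; auto.
     apply Nat.eqb_neq. intro E; apply swap_inj in E; auto. }
   rewrite E. auto. Qed.


Fixpoint wsum (n t : nat) (F : list nat -> R) : R :=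
  match t with
  | O => F nil
  | S t' => wsum n t' (fun l => rsum n (fun v => F (l ++ [v])))
  end.

Definition LT (n : nat) (l : list nat) : Prop := Forall (fun x => x < n)%nat l.

Lemma LT_snoc n l v : LT n l -> (v < n)%nat -> LT n (l ++ [v]).
Proof. intros. apply Forall_app; split; auto. Qed.

Lemma wsum_ext_lt n t F G : (forall l, LT n l -> F l = G l) -> wsum n t F = wsum n t G.
Proof. revert F G; induction t; intros F G H; simpl. apply H; constructor.
 apply IHt. intros l Hl. apply rsum_ext. intros v Hv. apply H, LT_snoc; auto. Qed.

Lemma wsum_le n t F G : (forall l, LT n l -> F l <= G l) -> wsum n t F <= wsum n t G.
Proof. revert F G; induction t; intros F G H; simpl. apply H; constructor.
 apply IHt. intros l Hl. apply rsum_le. intros v Hv. apply H, LT_snoc; auto. Qed.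

Lemma wsum_plus n t F G : wsum n t (fun l => F l + G l) = wsum n t F + wsum n t G.
Proof. revert F G; induction t; intros F G; simpl; auto.
 rewrite <- IHt. apply wsum_ext_lt. intros. apply rsum_plus. Qed.

Lemma wsum_scal n t c F : wsum n t (fun l => c * F l) = c * wsum n t F.
Proof. revert F; induction t; intros F; simpl; auto.
 rewrite <- IHt. apply wsum_ext_lt. intros. apply rsum_scal. Qed.

Lemma wsum_zero n t : wsum n t (fun _ => 0) = 0.
Proof. rewrite (wsum_ext_lt n t _ (fun l => 0 * 0)) by (intros; lra). rewrite wsum_scal. lra. Qed.

Lemma wsum_rsum n t m F : wsum n t (fun l => rsum m (fun j => F l j)) = rsum m (fun j => wsum n t (fun l => F l j)).
Proof. induction m; simpl. apply wsum_zero. rewrite wsum_plus, IHm. auto. Qed.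

Lemma wsum_nonneg n t F : (forall l, LT n l -> 0 <= F l) -> 0 <= wsum n t F.
Proof. intros H. rewrite <- (wsum_zero n t). apply wsum_le; auto. Qed.

Lemma Ebern_wsum q m n t F : Ebern q m (fun g => wsum n t (fun l => F g l)) = wsum n t (fun l => Ebern q m (fun g => F g l)).
Proof. revert F; induction t; intros F; simpl; auto.
 rewrite (IHt (fun g l => rsum n (fun v => F g (l ++ [v])))). apply wsum_ext_lt. intros.
 apply Ebern_rsum. Qed.

Lemma wsum_swap n t F j j' : (j < n)%nat -> (j' < n)%nat ->
  wsum n t F = wsum n t (fun l => F (map (swap j j') l)).
Proof. intros Hj Hj'. revert F; induction t; intros F; simpl; auto.
 rewrite IHt. apply wsum_ext_lt. intros l _.
 rewrite (rsum_swap n _ j j') by auto. apply rsum_ext. intros v _.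
 rewrite map_app. auto. Qed.

Lemma wsum_S n t F : wsum n (S t) F = wsum n t (fun l => rsum n (fun v => F (l ++ [v]))).
Proof. reflexivity. Qed.

Lemma powv_shift n p A t x i : powv n p A (S t) x i = powv n p A t (fun u => p * matvec n A x u) i.
Proof. revert i; induction t; intros i; auto.
 change (powv n p A (S (S t)) x i) with (p * matvec n A (powv n p A (S t) x) i).
 assert (E : powv n p A (S t) x = powv n p A t (fun u => p * matvec n A x u))
   by (apply functional_extensionality; auto).
 rewrite E. auto. Qed.

Lemma powv_walk n p A t x i : powv n p A t x i =
  p ^ t * wsum n t (fun l => pw A (i :: l) * x (last (i :: l) 0%nat)).
Proof. revert x; induction t; intros x. simpl. lra.
 rewrite powv_shift, IHt. rewrite wsum_S. rewrite <- tech_pow_Rmult.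
 rewrite (Rmult_comm p (p ^ t)), Rmult_assoc. f_equal.
 rewrite <- wsum_scal. apply wsum_ext_lt. intros l _.
 unfold matvec. rewrite <- !rsum_scal. apply rsum_ext. intros v _.
 change (i :: l ++ [v]) with ((i :: l) ++ [v]).
 rewrite pw_snoc by congruence. rewrite last_last. lra. Qed.

Lemma E_CC n q p T x i : E_Gnq n q (fun A => CC n A p T x i) =
  rsum (S T) (fun t => p ^ t * wsum n t (fun l => om n q (i :: l) * x (last (i :: l) 0%nat))).
Proof. unfold E_Gnq, CC. fold (tri n). rewrite Ebern_rsum. apply rsum_ext. intros t _.
 rewrite (Ebern_ext _ _ _ (fun g => p ^ t * wsum n t (fun l => pw (adj g) (i :: l) * x (last (i :: l) 0%nat))))
   by (intros; apply powv_walk).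
 rewrite Ebern_scal. f_equal.
 rewrite (Ebern_wsum q (tri n) n t (fun g l => pw (adj g) (i :: l) * x (last (i :: l) 0%nat))).
 apply wsum_ext_lt. intros l _. unfold om.
 rewrite (Ebern_ext _ _ _ (fun g => x (last (i :: l) 0%nat) * pw (adj g) (i :: l))) by (intros; lra).
 rewrite Ebern_scal. lra. Qed.


Lemma wsum_le_len n t F G : (forall l, LT n l -> length l = t -> F l <= G l) -> wsum n t F <= wsum n t G.
Proof. revert F G; induction t; intros F G H; simpl. apply H; [constructor|auto].
 apply IHt. intros l Hl Hlen. apply rsum_le. intros v Hv. apply H. apply LT_snoc; auto.
 rewrite length_app; simpl; lia. Qed.

Definition Wt n q i t j := wsum n t (fun l => om n q (i :: l) * ind (Nat.eqb (last (i :: l) 0%nat) j)).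
Definition Vt n q i t (x : nat -> R) := wsum n t (fun l => om n q (i :: l) * x (last (i :: l) 0%nat)).
Definition Tt n q i t := Vt n q i t (fun _ => 1).

Lemma LT_last n i l : (i < n)%nat -> LT n l -> (last (i :: l) 0%nat < n)%nat.
Proof. intros. assert (LT n (i :: l)) by (constructor; auto).
 unfold LT in H1. rewrite Forall_forall in H1. apply H1. apply last_In_ne. congruence. Qed.

Lemma Vt_W n q i t x : (i < n)%nat -> Vt n q i t x = rsum n (fun j => Wt n q i t j * x j).
Proof. intros Hi. unfold Vt, Wt.
 rewrite (rsum_ext _ _ (fun j => wsum n t (fun l => x j * (om n q (i :: l) * ind (Nat.eqb (last (i :: l) 0%nat) j))))).
 2:{ intros j _. rewrite wsum_scal. lra. }
 rewrite <- wsum_rsum. apply wsum_ext_lt. intros l Hl.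
 rewrite (rsum_ext _ (fun j => x j * _) (fun j => (om n q (i :: l) * x j) * ind (Nat.eqb j (last (i :: l) 0%nat)))).
 rewrite rsum_delta. auto. apply LT_last; auto.
 intros j _. rewrite Nat.eqb_sym. lra. Qed.

Lemma Wt_sym n q i t j j' : (i < n)%nat -> (j < n)%nat -> (j' < n)%nat -> j <> i -> j' <> i ->
  Wt n q i t j = Wt n q i t j'.
Proof. intros Hi Hj Hj' Hji Hj'i. unfold Wt. rewrite (wsum_swap n t _ j j') by auto.
 apply wsum_ext_lt. intros l Hl.
 assert (Ei : swap j j' i = i).
 { unfold swap. destruct (Nat.eqb_spec i j); [lia|]. destruct (Nat.eqb_spec i j'); [lia|auto]. }
 assert (E : i :: map (swap j j') l = map (swap j j') (i :: l)) by (simpl; rewrite Ei; auto).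
 rewrite E. rewrite om_swap by (auto; constructor; auto).
 rewrite (last_map_ne _ _ 0%nat 0%nat) by congruence. f_equal. f_equal.
 set (z := last (i :: l) 0%nat).
 destruct (Nat.eqb_spec z j').
 - rewrite e. unfold swap. rewrite Nat.eqb_refl. destruct (Nat.eqb_spec j' j); subst; apply Nat.eqb_refl.
 - apply Nat.eqb_neq. intro E2. apply n0. rewrite <- (swap_inv j j' z). rewrite E2. unfold swap.
   rewrite Nat.eqb_refl. auto.
Qed.

Lemma Vt_dec n q i j0 t x : (i < n)%nat -> (j0 < n)%nat -> j0 <> i ->
  Vt n q i t x = Wt n q i t i * x i + Wt n q i t j0 * (rsum n x - x i).
Proof. intros Hi Hj0 Hne. rewrite Vt_W by auto.
 rewrite (rsum_ext _ _ (fun j => if Nat.eqb j i then Wt n q i t i * x i else Wt n q i t j0 * x j)).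
 rewrite rsum_upd by auto. rewrite rsum_scal. lra.
 intros j Hj. destruct (Nat.eqb_spec j i). subst; auto.
 rewrite (Wt_sym n q i t j j0); auto. Qed.

Lemma Tt_dec n q i j0 t : (i < n)%nat -> (j0 < n)%nat -> j0 <> i ->
  Tt n q i t = Wt n q i t i + Wt n q i t j0 * (INR n - 1).
Proof. intros. unfold Tt. rewrite (Vt_dec n q i j0) by auto. rewrite rsum_const. lra. Qed.

Lemma Wt_nonneg n q i t j : 0 <= q <= 1 -> 0 <= Wt n q i t j.
Proof. intros. unfold Wt. apply wsum_nonneg. intros. pose proof (om_nonneg n q (i :: l) H).
 unfold ind; destruct (Nat.eqb _ _); lra. Qed.

Lemma Tt_nonneg n q i t : 0 <= q <= 1 -> 0 <= Tt n q i t.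
Proof. intros. unfold Tt, Vt. apply wsum_nonneg. intros. pose proof (om_nonneg n q (i :: l) H). lra. Qed.

Lemma Wt_0 n q i : Wt n q i 0 i = 1.
Proof. unfold Wt. simpl. rewrite Nat.eqb_refl. rewrite om_single. unfold ind; lra. Qed.

Lemma Tt_0 n q i : Tt n q i 0 = 1.
Proof. unfold Tt, Vt. simpl. rewrite om_single. lra. Qed.

Lemma Wt_S_le n q i t : 0 <= q <= 1 -> (i < n)%nat -> Wt n q i (S t) i <= Tt n q i t.
Proof. intros Hq Hi. unfold Wt, Tt, Vt. rewrite wsum_S. apply wsum_le. intros l Hl.
 assert (E : rsum n (fun v => om n q (i :: l ++ [v]) * ind (Nat.eqb (last (i :: l ++ [v]) 0%nat) i))
   = rsum n (fun v => om n q ((i :: l) ++ [v]) * ind (Nat.eqb v i))).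
 { apply rsum_ext. intros v _. change (i :: l ++ [v]) with ((i :: l) ++ [v]). rewrite last_last. auto. }
 rewrite E. rewrite (rsum_delta n (fun v => om n q ((i :: l) ++ [v])) i) by auto. rewrite Rmult_1_r.
 apply om_step_le; auto. congruence. Qed.

Lemma count_memb n w : rsum n (fun v => ind (memb v w)) <= INR (length w).
Proof. induction w as [|a w IH].
 - assert (rsum n (fun v => ind (memb v nil)) = 0).
   { clear. induction n. reflexivity. change (rsum (S n) (fun v => ind (memb v nil))) with (rsum n (fun v => ind (memb v nil)) + ind (memb n nil)). rewrite IHn. unfold ind, memb; simpl; lra. }
   simpl length. simpl INR. lra.
 - change (length (a :: w)) with (S (length w)). rewrite S_INR.
   assert (H : rsum n (fun v => ind (memb v (a :: w))) <= rsum n (fun v => ind (Nat.eqb v a) + ind (memb v w))).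
   { apply rsum_le. intros k _. unfold memb, ind. simpl. destruct (Nat.eqb k a); destruct (existsb _ w); simpl; lra. }
   rewrite rsum_plus in H.
   assert (rsum n (fun v => ind (Nat.eqb v a)) <= 1).
   { destruct (Nat.lt_ge_cases a n).
     - rewrite (rsum_ext _ _ (fun v => 1 * ind (Nat.eqb v a))) by (intros; lra). rewrite rsum_delta; auto. lra.
     - rewrite (rsum_ext _ _ (fun _ => 0)). rewrite rsum_const; lra.
       intros k Hk. destruct (Nat.eqb_spec k a); [lia|auto]. }
   unfold memb in *. lra. Qed.

Lemma step_lower n q w : 0 <= q <= 1 -> w <> nil -> LT n w ->
  rsum n (fun v => om n q (w ++ [v])) >= (INR n - INR (length w)) * q * om n q w.
Proof. intros Hq Hw Hl. pose proof (om_nonneg n q w Hq).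
 assert (H1 : rsum n (fun v => q * om n q w - q * om n q w * ind (memb v w)) <= rsum n (fun v => om n q (w ++ [v]))).
 { apply rsum_le. intros v Hv. destruct (memb v w) eqn:E; unfold ind.
   - pose proof (om_nonneg n q (w ++ [v]) Hq). lra.
   - rewrite om_step_new; auto. lra. }
 rewrite (rsum_ext _ _ (fun v => q * om n q w + (- (q * om n q w)) * ind (memb v w))) in H1 by (intros; lra).
 rewrite rsum_plus, rsum_const, rsum_scal in H1. pose proof (count_memb n w).
 assert (0 <= q * om n q w) by nra. nra. Qed.

Lemma step_upper n q w : 0 <= q <= 1 -> w <> nil -> LT n w ->
  rsum n (fun v => om n q (w ++ [v])) <= (INR n * q + INR (length w)) * om n q w.
Proof. intros Hq Hw Hl. pose proof (om_nonneg n q w Hq).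
 assert (H1 : rsum n (fun v => om n q (w ++ [v])) <= rsum n (fun v => q * om n q w + om n q w * ind (memb v w))).
 { apply rsum_le. intros v Hv. destruct (memb v w) eqn:E; unfold ind.
   - pose proof (om_step_le n q w v Hq Hw Hl Hv). nra.
   - rewrite om_step_new; auto. lra. }
 rewrite rsum_plus, rsum_const, rsum_scal in H1. pose proof (count_memb n w). nra. Qed.

Lemma Tt_S_lower n q i t : 0 <= q <= 1 -> (i < n)%nat ->
  Tt n q i (S t) >= (INR n - INR (S t)) * q * Tt n q i t.
Proof. intros Hq Hi. unfold Tt, Vt. rewrite wsum_S.
 rewrite <- wsum_scal. apply Rle_ge. apply wsum_le_len. intros l Hl Hlen.
 rewrite (rsum_ext _ _ (fun v => om n q ((i :: l) ++ [v]))) by (intros; rewrite Rmult_1_r; reflexivity).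
 pose proof (step_lower n q (i :: l) Hq ltac:(congruence) ltac:(constructor; auto)).
 simpl length in H. rewrite Hlen in H. lra. Qed.

Lemma Tt_S_upper n q i t : 0 <= q <= 1 -> (i < n)%nat ->
  Tt n q i (S t) <= (INR n * q + INR (S t)) * Tt n q i t.
Proof. intros Hq Hi. unfold Tt, Vt. rewrite wsum_S.
 rewrite <- wsum_scal. apply wsum_le_len. intros l Hl Hlen.
 rewrite (rsum_ext _ _ (fun v => om n q ((i :: l) ++ [v]))) by (intros; rewrite Rmult_1_r; reflexivity).
 pose proof (step_upper n q (i :: l) Hq ltac:(congruence) ltac:(constructor; auto)).
 simpl length in H. rewrite Hlen in H. lra. Qed.


Lemma rsum_Rabs n f : Rabs (rsum n f) <= rsum n (fun k => Rabs (f k)).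
Proof. induction n; simpl. rewrite Rabs_R0; lra.
 pose proof (Rabs_triang (rsum n f) (f n)). lra. Qed.

Lemma rsum_shift T f : rsum (S T) f = f 0%nat + rsum T (fun t => f (S t)).
Proof. induction T. simpl; lra. change (rsum (S (S T)) f) with (rsum (S T) f + f (S T)).
 rewrite IHT. simpl. lra. Qed.

Lemma rsum_ge_last T f : (forall k, (k < S T)%nat -> 0 <= f k) -> f T <= rsum (S T) f.
Proof. intros H. simpl. assert (0 <= rsum T f) by (apply rsum_nonneg; intros; apply H; lia). lra. Qed.

Section Fin.
Variables (n i0 j0 T : nat) (q p : R) (x : nat -> R).
Hypotheses (Hi0 : (i0 < n)%nat) (Hj0 : (j0 < n)%nat) (Hji : j0 <> i0) (Hn2 : (2 <= n)%nat)
  (Hq : 0 < q <= 1) (Hp : 0 < p).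

Let mu := (rsum n x - x i0) / (INR n - 1).
Let K := x i0 - mu.
Let X := rsum (S T) (fun t => p ^ t * Tt n q i0 t).
Let Aa := rsum (S T) (fun t => p ^ t * Wt n q i0 t i0).

Lemma Hn1 : 1 < INR n.
Proof. apply lt_1_INR. lia. Qed.

Lemma E_decomp : E_Gnq n q (fun A => CC n A p T x i0) = mu * X + K * Aa.
Proof. rewrite E_CC. unfold X, Aa. rewrite <- rsum_scal, <- rsum_scal, <- rsum_plus.
 apply rsum_ext. intros t _. fold (Vt n q i0 t x). rewrite (Vt_dec n q i0 j0) by auto.
 pose proof (Tt_dec n q i0 j0 t Hi0 Hj0 Hji). pose proof Hn1.
 unfold K, mu. rewrite H. field. lra. Qed.

Lemma Wt_le_Tt t : Wt n q i0 t i0 <= Tt n q i0 t.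
Proof. rewrite (Tt_dec n q i0 j0) by auto. pose proof (Wt_nonneg n q i0 t j0 ltac:(lra)).
 pose proof Hn1. nra. Qed.

Lemma X_nonneg : 0 <= X.
Proof. apply rsum_nonneg. intros. pose proof (Tt_nonneg n q i0 k ltac:(lra)).
 pose proof (pow_le p k ltac:(lra)). nra. Qed.

Lemma Aa_nonneg : 0 <= Aa.
Proof. apply rsum_nonneg. intros. pose proof (Wt_nonneg n q i0 k i0 ltac:(lra)).
 pose proof (pow_le p k ltac:(lra)). nra. Qed.

Lemma bound_a : Rabs (E_Gnq n q (fun A => CC n A p T x i0)) <= (Rabs K + Rabs mu) * X.
Proof. rewrite E_decomp. pose proof X_nonneg. pose proof Aa_nonneg.
 assert (Aa <= X). { apply rsum_le. intros t _. pose proof (Wt_le_Tt t). pose proof (pow_le p t ltac:(lra)). nra. }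
 pose proof (Rabs_triang (mu * X) (K * Aa)). rewrite !Rabs_mult in H2.
 rewrite (Rabs_right X), (Rabs_right Aa) in H2 by lra. pose proof (Rabs_pos K). pose proof (Rabs_pos mu). nra. Qed.

Lemma Tt_upper t : (t <= T)%nat -> Tt n q i0 t <= (INR n * q + INR T) ^ t.
Proof. induction t; intros Ht. rewrite Tt_0. simpl; lra.
 pose proof (Tt_S_upper n q i0 t ltac:(lra) Hi0). pose proof (Tt_nonneg n q i0 t ltac:(lra)).
 simpl. assert (INR (S t) <= INR T) by (apply le_INR; lia). pose proof (IHt ltac:(lia)).
 pose proof (pos_INR n). assert (0 <= INR n * q) by nra.
 apply Rle_trans with ((INR n * q + INR (S t)) * Tt n q i0 t); auto.
 apply Rle_trans with ((INR n * q + INR T) * Tt n q i0 t). apply Rmult_le_compat_r; lra.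
 pose proof (pos_INR T). apply Rmult_le_compat_l; lra. Qed.

Lemma X_upper : 1 <= p * (INR n * q + INR T) -> X <= INR (S T) * (p * (INR n * q + INR T)) ^ T.
Proof. intros Hb. unfold X. rewrite <- (rsum_const (S T)). apply rsum_le. intros t Ht.
 apply Rle_trans with (p ^ t * (INR n * q + INR T) ^ t).
 apply Rmult_le_compat_l. apply pow_le; lra. apply Tt_upper; lia.
 rewrite <- Rpow_mult_distr. apply Rle_pow; auto. lia. Qed.

Lemma Tt_lower t : (t <= T)%nat -> (T < n)%nat -> ((INR n - INR T) * q) ^ t <= Tt n q i0 t.
Proof. intros Ht HT. assert (INR T < INR n) by (apply lt_INR; auto).
 induction t. rewrite Tt_0. simpl; lra.
 pose proof (Tt_S_lower n q i0 t ltac:(lra) Hi0). pose proof (Tt_nonneg n q i0 t ltac:(lra)).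
 simpl. assert (INR (S t) <= INR T) by (apply le_INR; lia). pose proof (IHt ltac:(lia)).
 apply Rle_trans with ((INR n - INR T) * q * Tt n q i0 t).
 apply Rmult_le_compat_l; [nra|auto].
 apply Rge_le in H0. apply Rle_trans with ((INR n - INR (S t)) * q * Tt n q i0 t); auto.
 apply Rmult_le_compat_r; auto. apply Rmult_le_compat_r; lra. Qed.

Lemma X_lower : (T < n)%nat -> (p * q * (INR n - INR T)) ^ T <= X.
Proof. intros HT. unfold X. apply Rle_trans with (p ^ T * Tt n q i0 T).
 replace (p * q * (INR n - INR T)) with (p * ((INR n - INR T) * q)) by ring.
 rewrite Rpow_mult_distr. apply Rmult_le_compat_l. apply pow_le; lra. apply Tt_lower; lia.
 apply (rsum_ge_last T (fun t => p ^ t * Tt n q i0 t)). intros k _.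
 pose proof (Tt_nonneg n q i0 k ltac:(lra)). pose proof (pow_le p k ltac:(lra)). nra. Qed.

Lemma Aa_upper : (T < n)%nat -> Aa <= 1 + X / (q * (INR n - INR T)).
Proof. intros HT. assert (INR T < INR n) by (apply lt_INR; auto).
 assert (Hc : 0 < q * (INR n - INR T)) by (apply Rmult_lt_0_compat; lra).
 unfold Aa, X. rewrite !rsum_shift. rewrite !pow_O, Wt_0, Tt_0.
 assert (rsum T (fun t => p ^ S t * Wt n q i0 (S t) i0) <= rsum T (fun t => p ^ S t * Tt n q i0 (S t)) / (q * (INR n - INR T))).
 { unfold Rdiv. rewrite Rmult_comm, <- rsum_scal. apply rsum_le. intros t Ht.
   pose proof (Wt_S_le n q i0 t ltac:(lra) Hi0). pose proof (Tt_S_lower n q i0 t ltac:(lra) Hi0).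
   pose proof (Tt_nonneg n q i0 t ltac:(lra)).
   assert (INR (S t) <= INR T) by (apply le_INR; lia).
   assert (Wt n q i0 (S t) i0 <= Tt n q i0 (S t) / (q * (INR n - INR T))).
   { apply Rle_trans with (Tt n q i0 t); auto. apply Rmult_le_reg_r with (q * (INR n - INR T)); auto.
     unfold Rdiv. rewrite Rmult_assoc, Rinv_l by lra. assert (0 <= (INR T - INR (S t)) * (q * Tt n q i0 t)) by (apply Rmult_le_pos; [lra|apply Rmult_le_pos; lra]). nra. }
   pose proof (pow_le p (S t) ltac:(lra)). unfold Rdiv in H4.
   replace (/ (q * (INR n - INR T)) * (p ^ S t * Tt n q i0 (S t))) with (p ^ S t * (Tt n q i0 (S t) * / (q * (INR n - INR T)))) by ring.
   apply Rmult_le_compat_l; auto. }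
 assert (0 <= 1 * 1 * / (q * (INR n - INR T))) by (pose proof (Rinv_pos _ Hc); lra).
 unfold Rdiv in *. lra. Qed.

Lemma bound_b : Rabs (E_Gnq n q (fun A => CC n A p T x i0)) >= Rabs mu * X - Rabs K * Aa.
Proof. rewrite E_decomp. pose proof X_nonneg. pose proof Aa_nonneg.
 pose proof (Rabs_triang_inv (mu * X) (- (K * Aa))). rewrite Rabs_Ropp in H1.
 replace (mu * X - - (K * Aa)) with (mu * X + K * Aa) in H1 by ring.
 rewrite !Rabs_mult in H1. rewrite (Rabs_right X), (Rabs_right Aa) in H1 by lra. lra. Qed.
End Fin.


Lemma pow_exp x T : 0 < x -> x ^ T = exp (INR T * ln x).
Proof. intros. rewrite <- ln_pow by auto. rewrite exp_ln; auto. apply pow_lt; auto. Qed.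

Lemma exp_le a b : a <= b -> exp a <= exp b.
Proof. intros [H|H]. left; apply exp_increasing; auto. subst; lra. Qed.

Lemma ln_le a b : 0 < a -> a <= b -> ln a <= ln b.
Proof. intros H [H1|H1]. left; apply ln_increasing; auto. subst; lra. Qed.

Lemma pow_1px x T : 0 <= x -> (1 + x) ^ T <= exp (INR T * x).
Proof. intros Hx. apply Rle_trans with (exp x ^ T).
 apply pow_incr. split. lra. apply exp_ineq1_le.
 rewrite pow_exp by apply exp_pos. rewrite ln_exp. lra. Qed.

Lemma bernoulli x T : 0 <= x <= 1 -> 1 - INR T * x <= (1 - x) ^ T.
Proof. intros Hx. induction T. simpl; lra. rewrite S_INR. simpl.
 assert (0 <= INR T) by apply pos_INR. nra. Qed.

Lemma exp_sq x : 0 <= x -> x * x / 4 <= exp x.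
Proof. intros Hx. replace x with (x / 2 + x / 2) at 3 by field. rewrite exp_plus.
 pose proof (exp_ineq1_le (x / 2)). nra. Qed.

Lemma big_L a b c eps : 0 < a -> 0 < b -> 0 < c -> 0 < eps ->
  exists L0, 1 <= L0 /\ forall L, L0 <= L -> (a * L + b) * exp (- (c * L)) <= eps.
Proof. intros Ha Hb Hc He. exists (Rmax 1 (4 * (a + b) / (c * c * eps))). split. apply Rmax_l.
 intros L HL. assert (H1 : 1 <= L) by (eapply Rle_trans; [apply Rmax_l|eauto]).
 assert (H2 : 4 * (a + b) / (c * c * eps) <= L) by (eapply Rle_trans; [apply Rmax_r|eauto]).
 pose proof (exp_sq (c * L) ltac:(nra)).
 assert (Hp : 0 < exp (c * L)) by apply exp_pos.
 rewrite exp_Ropp. apply Rmult_le_reg_r with (exp (c * L)); auto.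
 rewrite Rmult_assoc, Rinv_l by lra. rewrite Rmult_1_r.
 assert (4 * (a + b) <= L * (c * c * eps)).
 { apply Rmult_le_reg_r with (/ (c * c * eps)). apply Rinv_0_lt_compat. repeat apply Rmult_lt_0_compat; auto.
   assert (0 < c * c * eps) by (repeat apply Rmult_lt_0_compat; auto).
   replace (L * (c * c * eps) * / (c * c * eps)) with L by (field; lra). unfold Rdiv in H2. lra. }
 assert (a * L + b <= (a + b) * L) by nra.
 assert ((a + b) * L * 4 <= L * L * (c * c * eps)) by nra.
 nra. Qed.

Lemma ev_ln L0 : exists N, forall n, (N <= n)%nat -> L0 <= ln (INR n).
Proof. destruct (INR_archimed 1 (exp L0)) as [N HN]. lra. exists N. intros n Hn.
 rewrite Rmult_1_r in HN. assert (INR N <= INR n) by (apply le_INR; auto).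
 rewrite <- (ln_exp L0). apply ln_le. apply exp_pos. lra. Qed.

Lemma ev_nat m : exists N, forall n, (N <= n)%nat -> (m <= n)%nat.
Proof. exists m. auto. Qed.

Lemma ev_real A : exists N, forall n, (N <= n)%nat -> A <= INR n.
Proof. destruct (INR_archimed 1 A) as [N HN]. lra. exists N. intros n Hn.
 assert (INR N <= INR n) by (apply le_INR; auto). lra. Qed.


Lemma abs_close w a : Rabs (w - a) <= Rabs a / 2 -> Rabs a / 2 <= Rabs w /\ Rabs w <= 2 * Rabs a.
Proof. unfold Rabs; destruct (Rcase_abs (w - a)), (Rcase_abs a), (Rcase_abs w); lra. Qed.

Lemma mu_bounds y yinf Y : Un_cv (ybar y) yinf -> yinf <> 0 ->
  exists N, forall n, (N <= n)%nat -> (2 <= n)%nat /\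
    Rabs yinf / 2 <= Rabs ((rsum n (yvec y) - Y) / (INR n - 1)) /\
    Rabs ((rsum n (yvec y) - Y) / (INR n - 1)) <= 2 * Rabs yinf.
Proof. intros Hy Hyi. assert (Ha : 0 < Rabs yinf) by (apply Rabs_pos_lt; auto).
 destruct (Hy (Rabs yinf / 8) ltac:(lra)) as [N1 HN1].
 destruct (ev_real (1 + 8 * (2 * Rabs yinf + Rabs Y) / Rabs yinf)) as [N2 HN2].
 exists (N1 + N2 + 2)%nat. intros n Hn. split. lia.
 specialize (HN1 n ltac:(lia)). specialize (HN2 n ltac:(lia)). unfold R_dist, ybar in HN1.
 assert (Hn2 : 2 <= INR n) by (replace 2 with (INR 2) by (simpl; lra); apply le_INR; lia).
 set (s := rsum n (fun k => y (S k))) in *. change (rsum n (yvec y)) with s.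
 set (u := s / INR n) in *.
 assert (Hmu : (s - Y) / (INR n - 1) = u + (u - Y) / (INR n - 1)) by (unfold u; field; lra).
 rewrite Hmu.
 assert (Hu : Rabs u <= 2 * Rabs yinf).
 { pose proof (Rabs_triang (u - yinf) yinf). replace (u - yinf + yinf) with u in H by ring. lra. }
 assert (Hd : Rabs ((u - Y) / (INR n - 1)) <= Rabs yinf / 8).
 { unfold Rdiv. rewrite Rabs_mult, Rabs_inv, (Rabs_right (INR n - 1)) by lra.
   pose proof (Rabs_triang u (- Y)). rewrite Rabs_Ropp in H.
   apply Rmult_le_reg_r with (INR n - 1). lra. rewrite Rmult_assoc, Rinv_l by lra.
   assert (8 * (2 * Rabs yinf + Rabs Y) / Rabs yinf <= INR n - 1) by lra.
   assert (8 * (2 * Rabs yinf + Rabs Y) <= (INR n - 1) * Rabs yinf).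
   { apply Rmult_le_reg_r with (/ Rabs yinf). apply Rinv_0_lt_compat; auto.
     replace ((INR n - 1) * Rabs yinf * / Rabs yinf) with (INR n - 1) by (field; lra). auto. }
   unfold Rminus at 1. lra. }
 pose proof (Rabs_triang (u - yinf) ((u - Y) / (INR n - 1))).
 replace (u - yinf + (u - Y) / (INR n - 1)) with ((u + (u - Y) / (INR n - 1)) - yinf) in H by ring.
 apply abs_close. lra. Qed.


Lemma basic_n (n : nat) (qn : R) : (2 <= n)%nat -> ln (INR n) <= qn * INR n <= sqrt (INR n) ->
  0 < ln (INR n) /\ 0 < qn <= 1 /\ 2 <= INR n.
Proof. intros Hn [H1 H2].
 assert (Hn2 : 2 <= INR n) by (replace 2 with (INR 2) by (simpl; lra); apply le_INR; lia).
 assert (HL : 0 < ln (INR n)). { rewrite <- ln_1. apply ln_increasing; lra. }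
 assert (Hq0 : 0 < qn) by nra.
 pose proof (sqrt_sqrt (INR n) ltac:(lra)). pose proof (sqrt_pos (INR n)).
 assert (qn * INR n * (qn * INR n) <= INR n) by nra.
 assert (qn * qn * INR n <= 1) by nra.
 split; auto. split; [split|]; auto; nra. Qed.

Lemma j0_ok i0 n : (i0 < n)%nat -> (2 <= n)%nat ->
  let j0 := if Nat.eqb i0 0 then 1%nat else 0%nat in (j0 < n)%nat /\ j0 <> i0.
Proof. intros. destruct (Nat.eqb_spec i0 0); simpl; lia. Qed.

Theorem theorem2
  (y : nat -> R) (yinf : R)
  (q p : nat -> R) (T : nat -> nat) (i : nat)
  (Hy : Un_cv (ybar y) yinf) (Hyinf : yinf <> 0)
  (Hp : forall n, (1 <= n)%nat -> 0 < p n)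
  (HT1 : forall n, (1 <= n)%nat -> (1 <= T n)%nat)
  (Hq : forall n, (1 <= n)%nat -> ln (INR n) <= q n * INR n <= sqrt (INR n))
  (HTo : forall eps, 0 < eps -> exists N, forall n, (N <= n)%nat ->
           INR (T n) <= eps * (q n * INR n))
  (Heps : exists eps, 0 < eps /\ forall n, (1 <= n)%nat ->
           INR n * p n * q n >= 1 + eps)
  (Hi : (1 <= i)%nat) :
  ((exists delta, 0 < delta /\ exists N, forall n, (N <= n)%nat ->
      INR (T n) <= (1 - delta) * ln (INR n) / ln (INR n * p n * q n)) ->
   forall eps, 0 < eps -> exists N, forall n, (N <= n)%nat ->
      Rabs (E_Gnq n (q n) (fun A => CC n A (p n) (T n) (yvec y) (i - 1)%nat))
        <= eps * INR n)
  /\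
  ((exists delta, 0 < delta /\ exists N, forall n, (N <= n)%nat ->
      INR (T n) >= (1 + delta) * ln (INR n) / ln (INR n * p n * q n)) ->
   exists c, 0 < c /\ exists N, forall n, (N <= n)%nat ->
      Rabs (E_Gnq n (q n) (fun A => CC n A (p n) (T n) (yvec y) (i - 1)%nat))
        >= c * INR n).
Proof.
 destruct Heps as [e0 [He0 Hr]].
 assert (Hya : 0 < Rabs yinf) by (apply Rabs_pos_lt; auto).
 set (Y := yvec y (i - 1)).
 destruct (mu_bounds y yinf Y Hy Hyinf) as [Nmu HNmu].
 split.
 - intros [d [Hd [Nd HNd]]] eps Heps.
   set (l := ln (1 + e0)).
   assert (Hl : 0 < l) by (unfold l; rewrite <- ln_1; apply ln_increasing; lra).
   set (C := / l). assert (HC : 0 < C) by (apply Rinv_0_lt_compat; auto).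
   destruct (HTo (d / (2 * C))) as [Ne HNe]. apply Rdiv_lt_0_compat; lra.
   set (M := Rabs Y + 4 * Rabs yinf). assert (HM : 0 < M) by (unfold M; pose proof (Rabs_pos Y); lra).
   destruct (big_L (M * C) M (d / 2) eps ltac:(nra) HM ltac:(lra) Heps) as [L0 [HL0 HbL]].
   destruct (ev_ln L0) as [NL HNL].
   exists (Nd + Ne + NL + Nmu + i + 2)%nat. intros n Hn.
   specialize (HNd n ltac:(lia)). specialize (HNe n ltac:(lia)). specialize (HNL n ltac:(lia)).
   destruct (HNmu n ltac:(lia)) as [_ [Hmu1 Hmu2]].
   assert (Hn2 : (2 <= n)%nat) by lia.
   destruct (basic_n n (q n) Hn2 (Hq n ltac:(lia))) as [HL [Hqn Hn2R]].
   specialize (Hr n ltac:(lia)). specialize (Hp n ltac:(lia)).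
   set (i0 := (i - 1)%nat) in *. assert (Hi0 : (i0 < n)%nat) by lia.
   destruct (j0_ok i0 n Hi0 Hn2) as [Hj0 Hji].
   set (j0 := if Nat.eqb i0 0 then 1%nat else 0%nat) in *.
   pose proof (bound_a n i0 j0 (T n) (q n) (p n) (yvec y) Hi0 Hj0 Hji Hn2 Hqn Hp) as BA.
   change (yvec y i0) with Y in BA.
   pose proof (X_upper n i0 j0 (T n) (q n) (p n) Hi0 Hj0 Hji Hn2 Hqn Hp) as XU.
   set (X := rsum (S (T n)) (fun t => p n ^ t * Tt n (q n) i0 t)) in *.
   set (mu := (rsum n (yvec y) - Y) / (INR n - 1)) in *.
   set (E := E_Gnq n (q n) (fun A => CC n A (p n) (T n) (yvec y) i0)) in *.
   assert (HX0 : 0 <= X) by (apply (X_nonneg n i0 (T n) (q n) (p n)); auto).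
   assert (HK : Rabs (Y - mu) + Rabs mu <= M).
   { pose proof (Rabs_triang Y (- mu)). rewrite Rabs_Ropp in H. unfold M. unfold Rminus. lra. }
   assert (BA' : Rabs E <= M * X) by nra.
   clear BA.
   set (L := ln (INR n)) in *. set (TT := T n) in *. set (qq := q n) in *. set (pp := p n) in *.
   set (r := INR n * pp * qq) in *.
   assert (Hr0 : 0 < r) by lra.
   assert (Hlr : l <= ln r) by (apply ln_le; lra).
   assert (HT0 : 0 <= INR TT) by apply pos_INR.
   assert (Hnq : 0 < INR n * qq) by nra.
   assert (H1 : INR TT * ln r <= (1 - d) * L).
   { apply Rmult_le_reg_r with (/ ln r). apply Rinv_0_lt_compat; lra.
     rewrite Rmult_assoc, Rinv_r by lra. unfold Rdiv in HNd. lra. }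
   assert (H2 : INR TT <= C * L).
   { unfold C. apply Rmult_le_reg_r with l; auto. replace (/ l * L * l) with L by (field; lra).
     assert (INR TT * l <= INR TT * ln r) by (apply Rmult_le_compat_l; lra). nra. }
   set (xx := INR TT / (INR n * qq)).
   assert (Hxx0 : 0 <= xx) by (unfold xx; apply Rmult_le_pos; [lra|apply Rlt_le, Rinv_0_lt_compat; lra]).
   assert (Hxx : xx <= d / (2 * C)).
   { unfold xx. apply Rmult_le_reg_r with (INR n * qq); auto. unfold Rdiv.
     rewrite Rmult_assoc, Rinv_l by lra. rewrite Rmult_1_r. rewrite (Rmult_comm qq) in HNe. unfold Rdiv in HNe. lra. }
   assert (Hbase : pp * (INR n * qq + INR TT) = r * (1 + xx)) by (unfold r, xx; field; lra).
   assert (H3 : (pp * (INR n * qq + INR TT)) ^ TT <= exp ((1 - d) * L + d / 2 * L)).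
   { rewrite Hbase, Rpow_mult_distr, pow_exp by auto. rewrite exp_plus.
     apply Rmult_le_compat. apply Rlt_le, exp_pos. apply pow_le; lra.
     apply exp_le; lra.
     apply Rle_trans with (exp (INR TT * xx)). apply pow_1px; auto.
     apply exp_le. apply Rle_trans with (C * L * (d / (2 * C))).
     apply Rmult_le_compat; lra. right. field. lra. }
   assert (H4 : 1 <= pp * (INR n * qq + INR TT)).
   { rewrite Hbase. assert (1 <= 1 + xx) by lra. nra. }
   specialize (XU H4).
   assert (Hexp : exp L = INR n) by (unfold L; apply exp_ln; lra).
   specialize (HbL L HNL).
   assert (HS : INR (S TT) <= C * L + 1) by (rewrite S_INR; lra).
   assert (H5 : X <= (C * L + 1) * exp ((1 - d) * L + d / 2 * L)).
   { eapply Rle_trans. apply XU. apply Rmult_le_compat; auto. apply pos_INR. apply pow_le. nra. }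
   replace ((1 - d) * L + d / 2 * L) with (- (d / 2 * L) + L) in H5 by field.
   rewrite exp_plus, Hexp in H5.
   assert (0 < exp (- (d / 2 * L))) by apply exp_pos.
   assert (M * X <= (M * C * L + M) * exp (- (d / 2 * L)) * INR n).
   { replace ((M * C * L + M) * exp (- (d / 2 * L)) * INR n) with (M * ((C * L + 1) * (exp (- (d / 2 * L)) * INR n))) by ring.
     apply Rmult_le_compat_l; lra. }
   assert ((M * C * L + M) * exp (- (d / 2 * L)) * INR n <= eps * INR n) by (apply Rmult_le_compat_r; lra).
   lra.
 - intros [d [Hd [Nd HNd]]].
   exists (Rabs yinf / 16). split. lra.
   set (M := Rabs Y + 2 * Rabs yinf). assert (HM : 0 < M) by (unfold M; pose proof (Rabs_pos Y); lra).
   destruct (HTo (1 / 2)) as [Nh HNh]. lra.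
   destruct (ev_ln (8 * M / Rabs yinf)) as [NL HNL].
   destruct (ev_real (16 * M / Rabs yinf)) as [NR HNR].
   exists (Nd + Nh + NL + NR + Nmu + i + 2)%nat. intros n Hn.
   specialize (HNd n ltac:(lia)). specialize (HNh n ltac:(lia)). specialize (HNL n ltac:(lia)).
   specialize (HNR n ltac:(lia)).
   destruct (HNmu n ltac:(lia)) as [_ [Hmu1 Hmu2]].
   assert (Hn2 : (2 <= n)%nat) by lia.
   pose proof (Hq n ltac:(lia)) as Hqq.
   destruct (basic_n n (q n) Hn2 Hqq) as [HL [Hqn Hn2R]].
   specialize (Hr n ltac:(lia)). specialize (Hp n ltac:(lia)).
   set (i0 := (i - 1)%nat) in *. assert (Hi0 : (i0 < n)%nat) by lia.
   destruct (j0_ok i0 n Hi0 Hn2) as [Hj0 Hji].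
   set (j0 := if Nat.eqb i0 0 then 1%nat else 0%nat) in *.
   set (L := ln (INR n)) in *. set (TT := T n) in *. set (qq := q n) in *. set (pp := p n) in *.
   assert (HT0 : 0 <= INR TT) by apply pos_INR.
   pose proof (sqrt_sqrt (INR n) ltac:(lra)). pose proof (sqrt_pos (INR n)).
   assert (Hsq : sqrt (INR n) <= INR n) by nra.
   assert (HTn : INR TT <= INR n / 2) by (unfold Rdiv; nra).
   assert (HTlt : (TT < n)%nat) by (apply INR_lt; lra).
   assert (HTsq : INR TT * INR TT <= INR n / 4) by nra.
   pose proof (bound_b n i0 j0 TT qq pp (yvec y) Hi0 Hj0 Hji Hn2 Hqn Hp) as BB.
   pose proof (Aa_upper n i0 j0 TT qq pp Hi0 Hj0 Hji Hn2 Hqn Hp HTlt) as AU.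
   pose proof (X_lower n i0 j0 TT qq pp Hi0 Hj0 Hji Hn2 Hqn Hp HTlt) as XL.
   change (yvec y i0) with Y in BB.
   set (X := rsum (S TT) (fun t => pp ^ t * Tt n qq i0 t)) in *.
   set (Aa := rsum (S TT) (fun t => pp ^ t * Wt n qq i0 t i0)) in *.
   set (mu := (rsum n (yvec y) - Y) / (INR n - 1)) in *.
   set (E := E_Gnq n qq (fun A => CC n A pp TT (yvec y) i0)) in *.
   assert (HX0 : 0 <= X) by (apply (X_nonneg n i0 TT qq pp); auto).
   assert (HK : Rabs (Y - mu) <= M).
   { pose proof (Rabs_triang Y (- mu)). rewrite Rabs_Ropp in H1. unfold M. unfold Rminus. lra. }
   assert (Hc : L / 2 <= qq * (INR n - INR TT)) by nra.
   assert (HcL : 8 * M <= L * Rabs yinf).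
   { apply Rmult_le_reg_r with (/ Rabs yinf). apply Rinv_0_lt_compat; auto.
     replace (L * Rabs yinf * / Rabs yinf) with L by (field; lra). unfold Rdiv in HNL. lra. }
   assert (Hratio : Rabs (Y - mu) * / (qq * (INR n - INR TT)) <= Rabs yinf / 4).
   { assert (0 < qq * (INR n - INR TT)) by lra.
     apply Rmult_le_reg_r with (qq * (INR n - INR TT)); auto.
     rewrite Rmult_assoc, Rinv_l by lra. pose proof (Rabs_pos (Y - mu)). nra. }
   assert (HE1 : Rabs E >= Rabs yinf / 4 * X - M).
   { assert (Rabs (Y - mu) * Aa <= M + Rabs yinf / 4 * X).
     { apply Rle_trans with (Rabs (Y - mu) * (1 + X / (qq * (INR n - INR TT)))).
       apply Rmult_le_compat_l; auto. apply Rabs_pos.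
       unfold Rdiv. replace (Rabs (Y - mu) * (1 + X * / (qq * (INR n - INR TT)))) with
         (Rabs (Y - mu) + (Rabs (Y - mu) * / (qq * (INR n - INR TT))) * X) by ring.
       assert ((Rabs (Y - mu) * / (qq * (INR n - INR TT))) * X <= Rabs yinf / 4 * X)
         by (apply Rmult_le_compat_r; auto). lra. }
     assert (Rabs yinf / 2 * X <= Rabs mu * X) by (apply Rmult_le_compat_r; lra). lra. }
   set (r := INR n * pp * qq) in *.
   assert (Hr1 : 1 < r) by lra.
   assert (Hlr : 0 < ln r) by (rewrite <- ln_1; apply ln_increasing; lra).
   assert (H1 : L <= INR TT * ln r).
   { assert ((1 + d) * L <= INR TT * ln r).
     { apply Rmult_le_reg_r with (/ ln r). apply Rinv_0_lt_compat; lra.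
       replace (INR TT * ln r * / ln r) with (INR TT) by (field; lra). unfold Rdiv in HNd. lra. }
     nra. }
   assert (Hexp : exp L = INR n) by (unfold L; apply exp_ln; lra).
   assert (H2 : INR n <= r ^ TT) by (rewrite pow_exp by lra; rewrite <- Hexp; apply exp_le; auto).
   set (xx := INR TT / INR n).
   assert (Hxx : 0 <= xx <= 1) by (unfold xx; split; [apply Rmult_le_pos; [lra|apply Rlt_le, Rinv_0_lt_compat; lra] |
      apply Rmult_le_reg_r with (INR n); [lra|]; unfold Rdiv; rewrite Rmult_assoc, Rinv_l by lra; lra]).
   assert (Hb : pp * qq * (INR n - INR TT) = r * (1 - xx)) by (unfold r, xx; field; lra).
   rewrite Hb, Rpow_mult_distr in XL.
   pose proof (bernoulli xx TT Hxx).
   assert (INR TT * xx <= 1 / 4).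
   { unfold xx. apply Rmult_le_reg_r with (INR n). lra. unfold Rdiv.
     replace (INR TT * (INR TT * / INR n) * INR n) with (INR TT * INR TT) by (field; lra). lra. }
   assert (3 / 4 * INR n <= X).
   { apply Rle_trans with (r ^ TT * (1 - xx) ^ TT); auto.
     apply Rle_trans with (INR n * (3 / 4)); [lra|]. apply Rmult_le_compat; lra. }
   assert (2 * M <= Rabs yinf / 8 * INR n).
   { apply Rmult_le_reg_r with (/ Rabs yinf). apply Rinv_0_lt_compat; auto.
     replace (Rabs yinf / 8 * INR n * / Rabs yinf) with (INR n / 8) by (field; lra). unfold Rdiv in HNR |- *. lra. }
   assert (Rabs yinf / 4 * (3 / 4 * INR n) <= Rabs yinf / 4 * X) by (apply Rmult_le_compat_l; lra). lra.
Qed.
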